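(* There exist singleton languages $L_1, L_2$ (over a finite alphabet) such that $\mathbb{PGI}^*(L_1)$ and $\mathbb{SGI}^*(L_2)$ are not regular. (For instance, over $\{a,b\}$, $\mathbb{PGI}^*(\{aab\}) \cap a^*b^* = \{a^i b^j \mid 2 \leq i \leq j+1\}$, and $\mathbb{SGI}^*(\{abb\})$ is non-regular.)
   Context: Prefix-guided insertion: $x \stackrel{\rm pgi}{\leftarrow} y = \{ x_1 y_1 y_2 x_2 \mid x = x_1 y_1 x_2,\ y = y_1 y_2,\ y_1 \neq \varepsilon \}$; suffix-guided insertion: $x \stackrel{\rm sgi}{\leftarrow} y = \{ x_1 y_1 y_2 x_2 \mid x = x_1 y_2 x_2,\ y = y_1 y_2,\ y_2 \neq \varepsilon \}$; both extended to languages by union over all pairs. For a language $L$: $\mathbb{PGI}^{(0)}(L) = L$, $\mathbb{PGI}^{(i+1)}(L) = \mathbb{PGI}^{(i)}(L) \stackrel{\rm pgi}{\leftarrow} \mathbb{PGI}^{(i)}(L)$, and $\mathbb{PGI}^*(L) = \bigcup_{i \geq 0} \mathbb{PGI}^{(i)}(L)$; $\mathbb{SGI}^*(L)$ is defined in the same way using $\stackrel{\rm sgi}{\leftarrow}$. *)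

(* Defs.v *)
From mathcomp Require Import all_boot.
Set Implicit Arguments. Unset Strict Implicit. Unset Printing Implicit Defensive.

Definition lang (T : Type) := seq T -> Prop.

Definition singleton_lang (T : Type) (w : seq T) : lang T := fun z => z = w.

Definition pgi_word (T : Type) (x y : seq T) : lang T := fun z =>
  exists x1 y1 y2 x2 : seq T,
    [/\ x = x1 ++ y1 ++ x2, y = y1 ++ y2, y1 <> [::] & z = x1 ++ y1 ++ y2 ++ x2].

Definition sgi_word (T : Type) (x y : seq T) : lang T := fun z =>
  exists x1 y1 y2 x2 : seq T,
    [/\ x = x1 ++ y2 ++ x2, y = y1 ++ y2, y2 <> [::] & z = x1 ++ y1 ++ y2 ++ x2].

Definition pgi_lang (T : Type) (L1 L2 : lang T) : lang T := fun z =>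
  exists x y, L1 x /\ L2 y /\ pgi_word x y z.
Definition sgi_lang (T : Type) (L1 L2 : lang T) : lang T := fun z =>
  exists x y, L1 x /\ L2 y /\ sgi_word x y z.

Fixpoint PGI_iter (T : Type) (i : nat) (L : lang T) : lang T :=
  match i with
  | 0 => L
  | i'.+1 => pgi_lang (PGI_iter i' L) (PGI_iter i' L)
  end.
Fixpoint SGI_iter (T : Type) (i : nat) (L : lang T) : lang T :=
  match i with
  | 0 => L
  | i'.+1 => sgi_lang (SGI_iter i' L) (SGI_iter i' L)
  end.

Definition PGI_star (T : Type) (L : lang T) : lang T := fun z => exists i, PGI_iter i L z.
Definition SGI_star (T : Type) (L : lang T) : lang T := fun z => exists i, SGI_iter i L z.

Definition regular (T : finType) (L : lang T) : Prop :=
  exists (Q : finType) (q0 : Q) (delta : Q -> T -> Q) (F : pred Q),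
    forall w : seq T, L w <-> F (foldl delta q0 w).

(* Main.v *)
Require Import Defs.
From mathcomp Require Import all_boot.
From mathcomp Require Import zify.
Set Implicit Arguments. Unset Strict Implicit. Unset Printing Implicit Defensive.

Notation ca s := (count id s).
Notation cb s := (count negb s).

Lemma cat_split (T : Type) (u v p q : seq T) : u ++ v = p ++ q ->
  exists r, (u = p ++ r /\ q = r ++ v) \/ (p = u ++ r /\ v = r ++ q).
Proof.
elim: u p => [|a u IH] [|b p] /=.
- by move=> ->; exists [::]; left.
- by move=> ->; exists (b :: p); right.
- by move=> <-; exists (a :: u); left.
- case=> -> /IH [r [[-> ->]|[-> ->]]]; exists r; [left|right]; by [].
Qed.

Lemma ne_catr (T : Type) (s t : seq T) : t <> [::] -> s ++ t <> [::].
Proof. by case: s => //; case: t. Qed.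
Lemma ne_catl (T : Type) (s t : seq T) : s <> [::] -> s ++ t <> [::].
Proof. by case: s. Qed.

Definition Pinv (w : seq bool) :=
  ca w <= cb w + 1 /\ forall u v, w = u ++ v -> u <> [::] -> ca v <= cb v.

Lemma Pinv_pgi x y z : Pinv x -> Pinv y -> pgi_word x y z -> Pinv z.
Proof.
move=> [Hx Sx] [Hy Sy] [x1 [y1 [y2 [x2 [ex ey ny1 ez]]]]].
have Hy2 : ca y2 <= cb y2 by apply: (Sy y1 y2).
split.
  move: Hx; rewrite ez ex !count_cat; lia.
move=> u v; rewrite ez => E nu.
have Hx2 : ca x2 <= cb x2.
  by apply: (Sx (x1 ++ y1) x2); [rewrite ex catA | exact: ne_catr].
case: (cat_split (esym E)) => r [[eu er]|[e1 ev]].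
- case: (cat_split (esym er)) => r' [[e1 e2]|[e1 e2]].
  + case: (cat_split (esym e2)) => r'' [[e3 e4]|[e3 e4]].
    * apply: (Sx (x1 ++ y1 ++ r'') v); first by rewrite ex e4 !catA.
      by apply: ne_catr; apply: ne_catl.
    * rewrite e4 !count_cat.
      have : ca r'' <= cb r''.
        by apply: (Sy (y1 ++ r')); [rewrite ey e3 catA | exact: ne_catl].
      lia.
  + clear er; case: r eu e1 => [|c r] eu e1.
    * rewrite cats0 in eu; subst u; simpl in e1; subst r'.
      have : ca (y1 ++ x2) <= cb (y1 ++ x2) by apply: (Sx x1); rewrite // ex.
      rewrite e2 !count_cat; lia.
    * rewrite e2 !count_cat.
      have : ca (r' ++ y2) <= cb (r' ++ y2).
        by apply: (Sy (c :: r)); rewrite // ey e1 -catA.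
      rewrite !count_cat; lia.
- have : ca (r ++ y1 ++ x2) <= cb (r ++ y1 ++ x2) by apply: (Sx u); rewrite // ex e1 -catA.
  rewrite ev !count_cat; lia.
Qed.

Definition Sinv (w : seq bool) :=
  cb w <= ca w + 1 /\ forall u v, w = u ++ v -> v <> [::] -> cb u <= ca u.

Lemma Sinv_sgi x y z : Sinv x -> Sinv y -> sgi_word x y z -> Sinv z.
Proof.
move=> [Hx Sx] [Hy Sy] [x1 [y1 [y2 [x2 [ex ey ny2 ez]]]]].
have Hy1 : cb y1 <= ca y1 by apply: (Sy y1 y2).
split.
  move: Hx; rewrite ez ex !count_cat; lia.
move=> u v; rewrite ez => E nv.
have Hx1 : cb x1 <= ca x1.
  by apply: (Sx x1 (y2 ++ x2)); [rewrite ex | exact: ne_catl].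
case: (cat_split (esym E)) => r [[eu er]|[e1 ev]].
- case: (cat_split (esym er)) => r' [[e1 e2]|[e1 e2]].
  + case: (cat_split (esym e2)) => r'' [[e3 e4]|[e3 e4]].
    * have : cb (x1 ++ y2 ++ r'') <= ca (x1 ++ y2 ++ r'').
        by apply: (Sx _ v); [rewrite ex e4 !catA|].
      rewrite eu e1 e3 !count_cat; lia.
    * have : cb (x1 ++ r') <= ca (x1 ++ r').
        apply: (Sx _ v) => //; by rewrite ex e3 e4 !catA.
      rewrite eu e1 !count_cat; lia.
  + have : cb r <= ca r.
      apply: (Sy r (r' ++ y2)); first by rewrite ey e1 catA.
      exact: ne_catr.
    rewrite eu !count_cat; lia.
- apply: (Sx u (r ++ y2 ++ x2)); first by rewrite ex e1 -catA.
  by apply: ne_catr; apply: ne_catl.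
Qed.

Lemma PGI_inv w0 n w : Pinv w0 -> PGI_iter n (singleton_lang w0) w -> Pinv w.
Proof.
move=> H0; elim: n w => [|n IH] w /=; first by move=> ->.
move=> [x [y [Hx [Hy Hp]]]]; exact: (Pinv_pgi (IH _ Hx) (IH _ Hy) Hp).
Qed.

Lemma SGI_inv w0 n w : Sinv w0 -> SGI_iter n (singleton_lang w0) w -> Sinv w.
Proof.
move=> H0; elim: n w => [|n IH] w /=; first by move=> ->.
move=> [x [y [Hx [Hy Hp]]]]; exact: (Sinv_sgi (IH _ Hx) (IH _ Hy) Hp).
Qed.

Lemma PGI_w0 (w0 : seq bool) n : w0 <> [::] -> PGI_iter n (singleton_lang w0) w0.
Proof.
move=> nw; elim: n => [|n IH] //=.
exists w0, w0; split => //; split => //.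
by exists [::], w0, [::], [::]; rewrite /= !cats0.
Qed.

Lemma SGI_w0 (w0 : seq bool) n : w0 <> [::] -> SGI_iter n (singleton_lang w0) w0.
Proof.
move=> nw; elim: n => [|n IH] //=.
exists w0, w0; split => //; split => //.
by exists [::], [::], w0, [::]; rewrite /= !cats0.
Qed.

Lemma nseqSr (x : bool) k s : nseq k.+1 x ++ s = nseq k x ++ x :: s.
Proof. by elim: k => //= k ->. Qed.

Lemma nseq_cons (x : bool) k s : nseq k x ++ x :: s = x :: (nseq k x ++ s).
Proof. by elim: k => //= k ->. Qed.

Lemma pgi_gen n : PGI_iter n (singleton_lang [:: true; true; false])
  (nseq n.+2 true ++ nseq n.+1 false).
Proof.
elim: n => [|n IH] //=.
exists (nseq n.+2 true ++ nseq n.+1 false), [:: true; true; false].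
split => //; split; first exact: PGI_w0.
exists (nseq n.+1 true), [:: true], [:: true; false], (nseq n.+1 false).
split => //.
  by rewrite /= !nseq_cons.
by rewrite /= !nseq_cons.
Qed.

Lemma sgi_gen n : SGI_iter n (singleton_lang [:: true; false; false])
  (nseq n.+1 true ++ nseq n.+2 false).
Proof.
elim: n => [|n IH] //=.
exists (nseq n.+1 true ++ nseq n.+2 false), [:: true; false; false].
split => //; split; first exact: SGI_w0.
exists (nseq n.+1 true), [:: true; false], [:: false], (nseq n.+1 false).
split => //.
  by rewrite /= !nseq_cons.
Qed.

Lemma pig (Q : finType) (f : nat -> Q) : exists i j, i < j /\ f i = f j.
Proof.
pose g := fun i : 'I_#|Q|.+1 => f i.
have : ~~ injectiveb g.
  apply/negP => /injectiveP /leq_card; rewrite card_ord; lia.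
case/injectivePn => i [j nij eq].
case: (ltngtP i j) => [lt|lt|e].
- by exists i, j.
- by exists j, i.
- by move: nij; rewrite (val_inj e) eqxx.
Qed.

Lemma cnt_ab k j : ca (nseq k true ++ nseq j false) = k /\ cb (nseq k true ++ nseq j false) = j.
Proof. by rewrite !count_cat !count_nseq /=; split; lia. Qed.

Theorem proposition4p4 :
  exists (T : finType) (w1 w2 : seq T),
    ~ regular (PGI_star (singleton_lang w1)) /\
    ~ regular (SGI_star (singleton_lang w2)).
Proof.
exists bool, [:: true; true; false], [:: true; false; false]; split.
- move=> [Q [q0 [delta [F HF]]]].
  have [i [j [lt e]]] := pig (fun n => foldl delta q0 (nseq n.+2 true)).
  have H1 : PGI_star (singleton_lang [:: true; true; false]) (nseq i.+2 true ++ nseq i.+1 false)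
    by exists i; exact: pgi_gen.
  have H2 : PGI_star (singleton_lang [:: true; true; false]) (nseq j.+2 true ++ nseq i.+1 false).
    by apply/HF; rewrite foldl_cat -e -foldl_cat; apply/HF.
  case: H2 => n /(PGI_inv _) [].
    split => //= u v; case: u => [|a u] //= [<-]; case: u => [|b u] //=.
      by move=> <-.
    case=> <-; case: u => [|c u] //=; first by move=> <-.
    by case=> <-; case: u => //= <-.
  have [-> ->] := cnt_ab j.+2 i.+1; lia.
- move=> [Q [q0 [delta [F HF]]]].
  have [i [j [lt e]]] := pig (fun n => foldl delta q0 (nseq n.+1 true)).
  have H1 : SGI_star (singleton_lang [:: true; false; false]) (nseq j.+1 true ++ nseq j.+2 false)
    by exists j; exact: sgi_gen.
  have H2 : SGI_star (singleton_lang [:: true; false; false]) (nseq i.+1 true ++ nseq j.+2 false).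
    by apply/HF; rewrite foldl_cat e -foldl_cat; apply/HF.
  case: H2 => n /(SGI_inv _) [].
    split => //; move=> [|a [|b [|c [|d u]]]] v //= E H; case: E => *; subst => //.
  have [-> ->] := cnt_ab i.+1 j.+2; lia.
Qed.
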